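(* Every top-choice social choice function is pseudomonotone, and hence for every $\varepsilon>0$ there is a lex-truthful randomized mechanism that $\varepsilon$-implements it.
   Context: Setting: agents $N=\{1,\dots,n\}$, finite outcome set $O$, each agent $j$ has a set $\Sigma_j$ of allowed strict total orders on $O$, $\Sigma=\prod_j\Sigma_j$; $\succ(1)$ denotes the top outcome of $\succ$ and $\mathrm{pos}_\succ(o)$ the position of $o$. A social choice function $f:\Sigma\to O$ is top-choice if $f(\succ)=g(\succ_1(1),\dots,\succ_n(1))$ for some $g:O^n\to O$ such that for all $j$, all $o_{-j}\in O^{n-1}$ and all $o\in O$: if $g(o,o_{-j})=o'$ then $g(o',o_{-j})=o'$ (here $o$ is in coordinate $j$). $f$ is pseudomonotone if for every $j$, $\succ_{-j}$, $\succ_j,\succ'_j\in\Sigma_j$, with $o=f(\succ_j,\succ_{-j})$, $o'=f(\succ'_j,\succ_{-j})$: either $o=o'$ or $o\succ_j o'$, or there is $o''$ with $o''\succ_j o'$ and $\mathrm{pos}_{\succ_j}(o'')<\mathrm{pos}_{\succ'_j}(o'')$. A randomized mechanism $\varepsilon$-implements $f$ if $\Pr[\mathcal{M}(\succ)=f(\succ)]\ge1-\varepsilon$ for all $\succ$. For lotteries $p\ne q$, $p$ lex-dominates $q$ w.r.t. $\succ$ if at the first position $i$ (in the order $\succ$) where $p(\succ(i))\ne q(\succ(i))$ we have $p(\succ(i))>q(\succ(i))$. $\mathcal{M}$ is lex-truthful if for all $j,\succ_j,\succ'_j,\succ_{-j}$, either $\mathcal{M}(\succ_j,\succ_{-j})=\mathcal{M}(\succ'_j,\succ_{-j})$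 or the former lex-dominates the latter w.r.t. $\succ_j$. *)

(* Defs.v *)
From HB Require Import structures.
From mathcomp Require Import all_boot all_order all_algebra.
From mathcomp Require Import reals.
Set Implicit Arguments. Unset Strict Implicit. Unset Printing Implicit Defensive.
Import Order.TTheory GRing.Theory Num.Theory.

(* A strict total order on the finite outcome set O is encoded as a ranking:
   a duplicate-free list [s] enumerating all outcomes, best first.
   o >_s o'  iff  index o s < index o' s ;  pos_s(o) = index o s (0-based). *)
Definition is_order (O : finType) (s : seq O) : Prop := perm_eq s (enum O).
Definition prefers (O : finType) (s : seq O) (o o' : O) : bool :=
  index o s < index o' s.
Definition pos (O : finType) (s : seq O) (o : O) : nat := index o s.
(* top outcome; the default [o0] is irrelevant for nonempty orders *)
Definition top (O : finType) (o0 : O) (s : seq O) : O := head o0 s.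

Definition profile (n : nat) (O : finType) := 'I_n -> seq O.
Definition upd (n : nat) (A : Type) (P : 'I_n -> A) (j : 'I_n) (x : A) : 'I_n -> A :=
  fun k => if k == j then x else P k.
Definition updf (n : nat) (O : finType) (t : {ffun 'I_n -> O}) (j : 'I_n) (o : O)
  : {ffun 'I_n -> O} := [ffun k => if k == j then o else t k].

Definition in_Sigma n (O : finType) (Sig : 'I_n -> pred (seq O)) (P : profile n O) :=
  forall j, Sig j (P j).

Definition top_choice n (O : finType) (o0 : O) (Sig : 'I_n -> pred (seq O))
  (f : profile n O -> O) : Prop :=
  exists g : {ffun 'I_n -> O} -> O,
    (forall P, in_Sigma Sig P -> f P = g [ffun j => top o0 (P j)]) /\
    (forall (j : 'I_n) (t : {ffun 'I_n -> O}) (o o' : O),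
        g (updf t j o) = o' -> g (updf t j o') = o').

Definition pseudomonotone n (O : finType) (Sig : 'I_n -> pred (seq O))
  (f : profile n O -> O) : Prop :=
  forall (j : 'I_n) (P : profile n O) (s' : seq O),
    in_Sigma Sig P -> Sig j s' ->
    let o := f P in let o' := f (upd P j s') in
    o = o' \/ prefers (P j) o o' \/
    exists o'' : O, prefers (P j) o'' o' /\ pos (P j) o'' < pos s' o''.

Definition is_lottery (R : realType) (O : finType) (p : {ffun O -> R}) : Prop :=
  (forall o, 0 <= p o)%R /\ (\sum_(o : O) p o = 1)%R.

Definition mechanism n (R : realType) (O : finType) := profile n O -> {ffun O -> R}.

Definition is_mechanism n (R : realType) (O : finType) (Sig : 'I_n -> pred (seq O))
  (M : mechanism n R O) : Prop :=
  forall P, in_Sigma Sig P -> is_lottery (M P).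

Definition eps_implements n (R : realType) (O : finType) (Sig : 'I_n -> pred (seq O))
  (M : mechanism n R O) (f : profile n O -> O) (eps : R) : Prop :=
  forall P, in_Sigma Sig P -> (1 - eps <= M P (f P))%R.

Definition lex_dominates (R : realType) (O : finType) (o0 : O) (s : seq O)
  (p q : {ffun O -> R}) : Prop :=
  exists i : nat, i < size s /\
    (forall k, k < i -> p (nth o0 s k) = q (nth o0 s k)) /\
    (q (nth o0 s i) < p (nth o0 s i))%R.

Definition lex_truthful n (R : realType) (O : finType) (o0 : O)
  (Sig : 'I_n -> pred (seq O)) (M : mechanism n R O) : Prop :=
  forall (j : 'I_n) (P : profile n O) (s' : seq O),
    in_Sigma Sig P -> Sig j s' ->
    M P = M (upd P j s') \/ lex_dominates o0 (P j) (M P) (M (upd P j s')).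

(* Main.v *)
Require Import Defs.
From HB Require Import structures.
From mathcomp Require Import all_boot all_order all_algebra.
From mathcomp Require Import reals.
From mathcomp Require Import lra.
Import Order.TTheory GRing.Theory Num.Theory.

Lemma ord_cons (O : finType) (o0 : O) (s : seq O) :
  is_order s -> exists x s1, s = x :: s1.
Proof.
move=> H; case: s H => [|x s1] H; last by exists x, s1.
have : o0 \in enum O by rewrite mem_enum.
by rewrite -(perm_mem H).
Qed.

Lemma ord_mem (O : finType) (s : seq O) o : is_order s -> o \in s.
Proof. by move=> H; rewrite (perm_mem H) mem_enum. Qed.

Lemma upd_sig n (O : finType) (Sig : 'I_n -> pred (seq O)) P j s' :
  in_Sigma Sig P -> Sig j s' -> in_Sigma Sig (upd P j s').
Proof. by move=> HP Hs k; rewrite /upd; case: eqP => [->|]. Qed.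

Lemma tops_upd n (O : finType) (o0 : O) (P : profile n O) j s' :
  [ffun k => top o0 (upd P j s' k)] =
  updf [ffun k => top o0 (P k)] j (top o0 s').
Proof. by apply/ffunP => k; rewrite !ffunE /upd; case: eqP. Qed.

Lemma tops_self n (O : finType) (o0 : O) (P : profile n O) j :
  [ffun k => top o0 (P k)] = updf [ffun k => top o0 (P k)] j (top o0 (P j)).
Proof. by apply/ffunP => k; rewrite !ffunE; case: eqP => [->|]. Qed.

Arguments ord_cons {O} o0 {s}.
Arguments ord_mem {O s} o.
Arguments upd_sig {n O Sig P j s'}.
Arguments tops_upd {n O} o0 P j s'.
Arguments tops_self {n O} o0 P j.

Theorem theorem18 (R : realType) (n : nat) (O : finType) (o0 : O)
  (Sig : 'I_n -> pred (seq O))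
  (HSig : forall j s, Sig j s -> is_order s)
  (f : profile n O -> O) :
  top_choice o0 Sig f ->
  pseudomonotone Sig f /\
  (forall eps : R, (0 < eps)%R ->
     exists M : mechanism n R O,
       is_mechanism Sig M /\ eps_implements Sig M f eps /\ lex_truthful o0 Sig M).
Proof.
Local Open Scope ring_scope.
case=> g [Hfg Hg].
have key : forall j P s', in_Sigma Sig P -> Sig j s' ->
    f (upd P j s') = top o0 (P j) -> f P = top o0 (P j).
  move=> j P s' HP Hs.
  rewrite (Hfg _ (upd_sig HP Hs)) (Hfg _ HP) tops_upd => /Hg.
  by rewrite -tops_self.
have same : forall j P s', in_Sigma Sig P -> Sig j s' ->
    top o0 s' = top o0 (P j) -> f (upd P j s') = f P.
  move=> j P s' HP Hs E.
  by rewrite (Hfg _ (upd_sig HP Hs)) (Hfg _ HP) tops_upd E -tops_self.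
split.
  move=> j P s' HP Hs /=.
  have [a [l Ea]] := ord_cons o0 (HSig _ _ (HP j)).
  have [b [l' Eb]] := ord_cons o0 (HSig _ _ Hs).
  have Ha : top o0 (P j) = a by rewrite Ea.
  case: (eqVneq (f (upd P j s')) a) => Ho'.
    by left; rewrite Ho' (key j P s' HP Hs) ?Ha.
  case: (eqVneq b a) => Hab.
    by left; rewrite (same j P s' HP Hs) // Ha Eb.
  right; right; exists a; split.
    rewrite /prefers Ea /= eqxx.
    have : f (upd P j s') \in P j by apply: ord_mem; apply: HSig (HP j).
    by rewrite Ea /= eq_sym (negbTE Ho').
  by rewrite /pos Ea Eb /= eqxx (negbTE Hab).
case: n Sig HSig f g Hfg Hg key same => [|n] Sig HSig f g Hfg Hg key same eps Heps.
  exists (fun P => [ffun o => ((o == f P)%:R : R)]); split; last split.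
  - move=> P HP; split; first by move=> o; rewrite ffunE ler0n.
    rewrite (bigD1 (f P)) //= ffunE eqxx big1 ?addr0 // => o Ho.
    by rewrite ffunE (negbTE Ho).
  - move=> P HP; rewrite ffunE eqxx lerBlDr lerDl; exact: ltW.
  - by move=> [].
set w := Num.min eps 1.
have w0 : (0 < w)%R by rewrite lt_min Heps ltr01.
have w1 : (w <= 1)%R by rewrite ge_min lexx orbT.
have we : (w <= eps)%R by rewrite ge_min lexx.
set N : R := n.+1%:R.
have N0 : (0 < N)%R by rewrite ltr0n.
clearbody w.
exists (fun P => [ffun o => (1 - w) * ((o == f P)%:R) +
          w / N * \sum_(k < n.+1) ((top o0 (P k) == o)%:R)]%R).
split; last split.
- move=> P HP; split.
    move=> o; rewrite ffunE addr_ge0 // mulr_ge0 //.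
    + by rewrite subr_ge0.
    + by rewrite divr_ge0 // ltW.
    by rewrite sumr_ge0.
  under eq_bigr => o _ do rewrite ffunE.
  rewrite big_split /= -!mulr_sumr.
  have -> : (\sum_(i : O) ((i == f P)%:R : R) = 1)%R.
    rewrite (bigD1 (f P)) //= eqxx big1 ?addr0 // => o Ho.
    by rewrite (negbTE Ho).
  rewrite exchange_big /=.
  have -> : (\sum_(k < n.+1) \sum_(i : O) ((top o0 (P k) == i)%:R : R) = N)%R.
    rewrite /N -[X in X%:R]card_ord -sum1_card natr_sum; apply: eq_bigr => k _.
    rewrite (bigD1 (top o0 (P k))) //= eqxx big1 ?addr0 // => o Ho.
    by rewrite eq_sym (negbTE Ho).
  rewrite mulr1 -mulrA mulVf ?mulr1 ?subrK //; exact: lt0r_neq0.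
- move=> P HP; rewrite ffunE eqxx mulr1.
  have : 0 <= w / N * \sum_(k < n.+1) ((top o0 (P k) == f P)%:R : R).
    by rewrite mulr_ge0 ?sumr_ge0 // divr_ge0 // ltW.
  move=> HH; apply: (le_trans (y := 1 - w)); first lra.
  by rewrite lerDl.
- move=> j P s' HP Hs.
  case: (eqVneq (top o0 s') (top o0 (P j))) => E.
    left; apply/ffunP => o; rewrite !ffunE (same j P s' HP Hs E).
    congr (_ + _ * _); apply: eq_bigr => k _; rewrite /upd.
    by case: ifP => [/eqP ->|] //; rewrite E.
  right; have [a [l Ea]] := ord_cons o0 (HSig _ _ (HP j)).
  have Ha : top o0 (P j) = a by rewrite Ea.
  exists 0%N; split; first by rewrite Ea.
  split; first by [].
  rewrite Ea /= !ffunE.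
  have Hi : ((a == f (upd P j s'))%:R : R) <= (a == f P)%:R.
    case: eqP => H; last exact: ler0n.
    by rewrite (key j P s' HP Hs) ?Ha // eqxx.
  rewrite (bigD1 j) //= [X in _ < _ + _ * X](bigD1 j) //=.
  have Ea' : top o0 s' != a by rewrite -Ha.
  have Uj : upd P j s' j = s' by rewrite /upd eqxx.
  rewrite Uj Ha (negbTE Ea') eqxx.
  set S := \sum_(k < n.+1 | k != j) ((top o0 (P k) == a)%:R : R).
  have -> : \sum_(k < n.+1 | k != j) ((top o0 (upd P j s' k) == a)%:R : R) = S.
    by apply: eq_bigr => k Hk; rewrite /upd (negbTE Hk).
  have H1 : (1 - w) * (a == f (upd P j s'))%:R <= (1 - w) * (a == f P)%:R.
    by apply: ler_wpM2l => //; rewrite subr_ge0.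
  have c0 : 0 < w / N by rewrite divr_gt0.
  rewrite add0r mulrDr mulr1.
  clearbody S N; move: H1 c0.
  generalize ((1 - w) * (a == f (upd P j s'))%:R) ((1 - w) * (a == f P)%:R) (w / N * S) (w / N).
  move=> x y z c; lra.
Qed.
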